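(* Let $(X,(\cdot,\cdot|\cdot))$ be a 2-inner product space over $\mathbb{K}\in\{\mathbb{R},\mathbb{C}\}$, let $n$ be a positive integer, let $z_1,\dots,z_n,z\in X$ and $\mu_1,\dots,\mu_n\in\mathbb{K}$. Define $A_1=\max_{1\le i\le n}|\mu_i|^2\sum_{i=1}^n\|z_i|z\|^2$; $A_2(\alpha)=\big(\sum_{i=1}^n|\mu_i|^{2\alpha}\big)^{1/\alpha}\big(\sum_{i=1}^n\|z_i|z\|^{2\beta}\big)^{1/\beta}$ for $\alpha>1$, $\frac1\alpha+\frac1\beta=1$; $A_3=\sum_{i=1}^n|\mu_i|^2\max_{1\le i\le n}\|z_i|z\|^2$; and $B_1=\max_{1\le i\ne j\le n}|\mu_i\mu_j|\sum_{1\le i\ne j\le n}|(z_i,z_j|z)|$; $B_2(\gamma)=\Big[\big(\sum_{i=1}^n|\mu_i|^{\gamma}\big)^2-\sum_{i=1}^n|\mu_i|^{2\gamma}\Big]^{1/\gamma}\big(\sum_{1\le i\ne j\le n}|(z_i,z_j|z)|^{\delta}\big)^{1/\delta}$ for $\gamma>1$, $\frac1\gamma+\frac1\delta=1$; $B_3=\Big[\big(\sum_{i=1}^n|\mu_i|\big)^2-\sum_{i=1}^n|\mu_i|^2\Big]\max_{1\le i\ne j\le n}|(z_i,z_j|z)|$. Then for every choice of $A\in\{A_1,A_2(\alpha),A_3\}$ and $B\in\{B_1,B_2(\gamma),B_3\}$ (with any admissible $\alpha,\gamma$), \[ \Big\|\sum_{i=1}^n\mu_iz_i\,\Big|\,z\Big\|^2\le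 A+B. \]
   Context: A 2-inner product on a linear space $X$ of dimension greater than $1$ over $\mathbb{K}$ ($\mathbb{K}=\mathbb{R}$ or $\mathbb{C}$) is a function $(\cdot,\cdot|\cdot):X\times X\times X\to\mathbb{K}$ such that for all $x,x',y,z\in X$ and $\alpha\in\mathbb{K}$: (i) $(x,x|z)\ge 0$, and $(x,x|z)=0$ iff $x$ and $z$ are linearly dependent; (ii) $(x,x|z)=(z,z|x)$; (iii) $(y,x|z)=\overline{(x,y|z)}$; (iv) $(\alpha x,y|z)=\alpha(x,y|z)$; (v) $(x+x',y|z)=(x,y|z)+(x',y|z)$. The associated 2-norm is $\|x|z\|=\sqrt{(x,x|z)}$. Sums and maxima indexed by $1\le i\ne j\le n$ run over all ordered pairs $(i,j)$ with $i,j\in\{1,\dots,n\}$, $i\ne j$. *)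

(* Defs.v *)
From HB Require Import structures.
From mathcomp Require Import all_boot all_order all_algebra.
From mathcomp Require Import all_classical all_reals.
From mathcomp Require Import exp.
From mathcomp Require Import complex.
Set Implicit Arguments. Unset Strict Implicit. Unset Printing Implicit Defensive.
Import Order.TTheory GRing.Theory Num.Theory.
Local Open Scope ring_scope.

Definition lin_dep (K : numFieldType) (V : lmodType K) (x z : V) : Prop :=
  exists a b : K, (a != 0 \/ b != 0) /\ a *: x + b *: z = 0.

Record is_2ip (K : numFieldType) (conj : K -> K) (V : lmodType K)
    (ip : V -> V -> V -> K) : Prop := {
  ip_dim : exists x y : V, ~ lin_dep x y;
  ip_ge0 : forall x z : V, 0 <= ip x x z;
  ip_eq0 : forall x z : V, ip x x z = 0 <-> lin_dep x z;
  ip_sym : forall x z : V, ip x x z = ip z z x;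
  ip_conj : forall x y z : V, ip y x z = conj (ip x y z);
  ip_scale : forall (a : K) (x y z : V), ip (a *: x) y z = a * ip x y z;
  ip_add : forall x x' y z : V, ip (x + x') y z = ip x y z + ip x' y z }.

Section Quantities.
Variables (R : realType) (K : numFieldType) (modK : K -> R).
Variables (V : lmodType K) (ip : V -> V -> V -> K).
Variables (n : nat) (zs : 'I_n -> V) (z : V) (mu : 'I_n -> K).

(* ||z_i | z||^2 = (z_i, z_i | z), a nonnegative scalar, seen in R *)
Definition nz2 (i : 'I_n) : R := modK (ip (zs i) (zs i) z).
Definition ipa (i j : 'I_n) : R := modK (ip (zs i) (zs j) z).
Definition mua (i : 'I_n) : R := modK (mu i).

Definition A1 : R := (\big[Num.max/0]_(i < n) mua i ^+ 2) * \sum_(i < n) nz2 i.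
Definition A2 (alpha beta : R) : R :=
  (\sum_(i < n) mua i `^ (2 * alpha)) `^ alpha^-1 *
  (\sum_(i < n) nz2 i `^ beta) `^ beta^-1.
Definition A3 : R := (\sum_(i < n) mua i ^+ 2) * \big[Num.max/0]_(i < n) nz2 i.

Definition B1 : R :=
  (\big[Num.max/0]_(i < n) \big[Num.max/0]_(j < n | j != i) modK (mu i * mu j)) *
  \sum_(i < n) \sum_(j < n | j != i) ipa i j.
Definition B2 (gamma delta : R) : R :=
  ((\sum_(i < n) mua i `^ gamma) ^+ 2 - \sum_(i < n) mua i `^ (2 * gamma)) `^ gamma^-1 *
  (\sum_(i < n) \sum_(j < n | j != i) ipa i j `^ delta) `^ delta^-1.
Definition B3 : R :=
  ((\sum_(i < n) mua i) ^+ 2 - \sum_(i < n) mua i ^+ 2) *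
  \big[Num.max/0]_(i < n) \big[Num.max/0]_(j < n | j != i) ipa i j.

Definition lhs : R := modK (ip (\sum_(i < n) mu i *: zs i) (\sum_(i < n) mu i *: zs i) z).
End Quantities.

Definition lemma2p1_stmt (R : realType) (K : numFieldType) (conj : K -> K)
    (modK : K -> R) : Prop :=
  forall (V : lmodType K) (ip : V -> V -> V -> K), is_2ip conj ip ->
  forall (n : nat), (0 < n)%N ->
  forall (zs : 'I_n -> V) (z : V) (mu : 'I_n -> K) (alpha beta gamma delta : R),
    1 < alpha -> alpha^-1 + beta^-1 = 1 ->
    1 < gamma -> gamma^-1 + delta^-1 = 1 ->
    forall A B : R,
      A \in [:: A1 modK ip zs z mu; A2 modK ip zs z mu alpha beta; A3 modK ip zs z mu] ->
      B \in [:: B1 modK ip zs z mu; B2 modK ip zs z mu gamma delta; B3 modK ip zs z mu] ->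
      lhs modK ip zs z mu <= A + B.

(* Main.v *)
Require Import Defs.
From mathcomp Require Import all_boot all_order all_algebra.
From mathcomp Require Import all_classical all_reals.
From mathcomp Require Import exp complex.
From mathcomp Require Import ring lra.
Import Order.TTheory GRing.Theory Num.Theory.
Local Open Scope ring_scope.

Section RealPart.
Variable R : realType.

Lemma powR_divr (x A p : R) : 0 <= x -> 0 < A -> (x / A) `^ p = x `^ p / A `^ p.
Proof.
move=> x0 A0; rewrite (powRM _ x0) ?invr_ge0 ?(ltW A0) //; congr (_ * _).
by rewrite -powR_inv1 ?ltW // -powRrM mulrC powRrM powR_inv1 // powR_ge0.
Qed.


Lemma hoelder_fin (I : finType) (P : pred I) (f g : I -> R) (p q : R) :
  (forall k, 0 <= f k) -> (forall k, 0 <= g k) -> 0 < p -> 0 < q -> p^-1 + q^-1 = 1 ->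
  \sum_(k | P k) f k * g k <=
  (\sum_(k | P k) f k `^ p) `^ p^-1 * (\sum_(k | P k) g k `^ q) `^ q^-1.
Proof.
move=> f0 g0 p0 q0 pq.
set SA := \sum_(k | P k) f k `^ p; set SB := \sum_(k | P k) g k `^ q.
have SA0 : 0 <= SA by apply: sumr_ge0 => k _; exact: powR_ge0.
have SB0 : 0 <= SB by apply: sumr_ge0 => k _; exact: powR_ge0.
have RHS0 : 0 <= SA `^ p^-1 * SB `^ q^-1 by rewrite mulr_ge0 ?powR_ge0.
have [SAe|SAn] := eqVneq SA 0.
  have := SAe; rewrite /SA => /psumr_eq0P H.
  have {}H := H (fun i _ => powR_ge0 _ _).
  by rewrite big1 // => k Pk; rewrite (@powR_eq0_eq0 _ _ p (H k Pk)) mul0r.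
have [SBe|SBn] := eqVneq SB 0.
  have := SBe; rewrite /SB => /psumr_eq0P H.
  have {}H := H (fun i _ => powR_ge0 _ _).
  by rewrite big1 // => k Pk; rewrite (@powR_eq0_eq0 _ _ q (H k Pk)) mulr0.
have SAp : 0 < SA by rewrite lt_def SAn.
have SBp : 0 < SB by rewrite lt_def SBn.
set A := SA `^ p^-1; set B := SB `^ q^-1.
have Ap : 0 < A by exact: powR_gt0.
have Bp : 0 < B by exact: powR_gt0.
have hA : A `^ p = SA by rewrite -powRrM mulVf ?gt_eqF // powRr1.
have hB : B `^ q = SB by rewrite -powRrM mulVf ?gt_eqF // powRr1.
clearbody A B.
have key : forall k, f k / A * (g k / B) <= f k `^ p / SA / p + g k `^ q / SB / q.
  move=> k; have fA : 0 <= f k / A := divr_ge0 (f0 k) (ltW Ap).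
  have gB : 0 <= g k / B := divr_ge0 (g0 k) (ltW Bp).
  have HH := conjugate_powR fA gB p0 q0 pq. 
  rewrite (@powR_divr (f k) A p (f0 k) Ap) (@powR_divr (g k) B q (g0 k) Bp) hA hB in HH.
  exact: HH.
have H1 : \sum_(k | P k) (f k / A * (g k / B)) <= 1.
  apply: le_trans (ler_sum _ (fun k _ => key k)) _.
  rewrite big_split /= -!mulr_suml -/SA -/SB !divff ?gt_eqF // !mul1r pq //.
have -> : \sum_(k | P k) f k * g k = A * B * \sum_(k | P k) (f k / A * (g k / B)).
  rewrite mulr_sumr; apply: eq_bigr => k _.
  by rewrite mulrACA (mulrC A) (mulrC B) !divfK ?gt_eqF.
by rewrite -[X in _ <= X]mulr1 ler_wpM2l // mulr_ge0 ?ltW.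
Qed.

Lemma sq_sum_off n (b : 'I_n -> R) :
  (\sum_(i < n) b i) ^+ 2 - \sum_(i < n) b i ^+ 2 =
  \sum_(i < n) \sum_(j < n | j != i) b i * b j.
Proof.
rewrite expr2 big_distrlr /=.
have -> : \sum_(i < n) \sum_(j < n) b i * b j =
   \sum_(i < n) (b i ^+ 2 + \sum_(j < n | j != i) b i * b j).
  by apply: eq_bigr => i _; rewrite (bigD1 i) //= expr2.
by rewrite big_split /= addrC addrK.
Qed.

Variables (n : nat) (a d : 'I_n -> R) (c : 'I_n -> 'I_n -> R).
Hypotheses (a0 : forall i, 0 <= a i) (d0 : forall i, 0 <= d i)
  (c0 : forall i j, 0 <= c i j).

Let Dg := \sum_(i < n) a i ^+ 2 * d i.
Let Off := \sum_(i < n) \sum_(j < n | j != i) a i * a j * c i j.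

Lemma LA1 : Dg <= (\big[Num.max/0]_(i < n) a i ^+ 2) * \sum_(i < n) d i.
Proof.
rewrite mulr_sumr; apply: ler_sum => i _; rewrite ler_wpM2r //.
exact: (le_bigmax 0 (fun i => a i ^+ 2)).
Qed.

Lemma LA3 : Dg <= (\sum_(i < n) a i ^+ 2) * \big[Num.max/0]_(i < n) d i.
Proof.
rewrite mulr_suml; apply: ler_sum => i _; rewrite ler_wpM2l ?sqr_ge0 //.
exact: (le_bigmax 0 d).
Qed.

Lemma LA2 (alpha beta : R) : 1 < alpha -> alpha^-1 + beta^-1 = 1 ->
  Dg <= (\sum_(i < n) a i `^ (2 * alpha)) `^ alpha^-1 *
        (\sum_(i < n) d i `^ beta) `^ beta^-1.
Proof.
move=> al ab.
have alp : 0 < alpha by apply: lt_trans al.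
have bep : 0 < beta.
  have hb : beta^-1 = 1 - alpha^-1 by lra.
  by rewrite -invr_gt0 hb subr_gt0 invf_lt1.
have -> : \sum_(i < n) a i `^ (2 * alpha) = \sum_(i < n) (a i ^+ 2) `^ alpha.
  by apply: eq_bigr => i _; rewrite powRrM powR_mulrn.
apply: hoelder_fin => // i; exact: sqr_ge0.
Qed.

Lemma LB1 (m : 'I_n -> 'I_n -> R) : (forall i j, a i * a j <= m i j) ->
  Off <= (\big[Num.max/0]_(i < n) \big[Num.max/0]_(j < n | j != i) m i j) *
         \sum_(i < n) \sum_(j < n | j != i) c i j.
Proof.
move=> hm; rewrite mulr_sumr; apply: ler_sum => i _.
rewrite mulr_sumr; apply: ler_sum => j ji; rewrite ler_wpM2r //.
apply: le_trans (hm i j) _.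
apply: le_trans (le_bigmax 0 (fun i => \big[Num.max/0]_(j < n | j != i) m i j) i).
exact: (le_bigmax_cond 0 (j:=j) (P := fun j => j != i) (fun j => m i j) ji).
Qed.

Lemma LB3 : Off <= ((\sum_(i < n) a i) ^+ 2 - \sum_(i < n) a i ^+ 2) *
   \big[Num.max/0]_(i < n) \big[Num.max/0]_(j < n | j != i) c i j.
Proof.
rewrite sq_sum_off mulr_suml; apply: ler_sum => i _.
rewrite mulr_suml; apply: ler_sum => j ji; rewrite ler_wpM2l ?mulr_ge0 //.
apply: le_trans (le_bigmax 0 (fun i => \big[Num.max/0]_(j < n | j != i) c i j) i).
exact: (le_bigmax_cond 0 (j:=j) (P := fun j => j != i) (fun j => c i j) ji).
Qed.

Lemma LB2 (gamma delta : R) : 1 < gamma -> gamma^-1 + delta^-1 = 1 ->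
  Off <= ((\sum_(i < n) a i `^ gamma) ^+ 2 - \sum_(i < n) a i `^ (2 * gamma)) `^ gamma^-1 *
  (\sum_(i < n) \sum_(j < n | j != i) c i j `^ delta) `^ delta^-1.
Proof.
move=> al ab.
have alp : 0 < gamma by apply: lt_trans al.
have bep : 0 < delta.
  have hb : delta^-1 = 1 - gamma^-1 by lra.
  by rewrite -invr_gt0 hb subr_gt0 invf_lt1.
have -> : \sum_(i < n) a i `^ (2 * gamma) = \sum_(i < n) (a i `^ gamma) ^+ 2.
  by apply: eq_bigr => i _; rewrite mulrC powRrM powR_mulrn ?powR_ge0.
rewrite sq_sum_off.
have -> : \sum_(i < n) \sum_(j < n | j != i) a i `^ gamma * a j `^ gamma =
  \sum_(k | k.2 != k.1) (a k.1 * a k.2) `^ gamma.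
  rewrite (pair_big_dep xpredT (fun i j => j != i)) /=.
  by apply: eq_bigr => k _; rewrite powRM.
rewrite /Off (pair_big_dep xpredT (fun i j => j != i)
   (fun i j => c i j `^ delta)) /=.
rewrite (pair_big_dep xpredT (fun i j => j != i)) /=.

apply: (@hoelder_fin _ (fun k => k.2 != k.1) (fun k => a k.1 * a k.2) (fun k => c k.1 k.2) gamma delta) => //.
by move=> k; rewrite mulr_ge0.
Qed.

End RealPart.
Section Generic.
Variables (R : realType) (K : numFieldType) (conj : K -> K) (modK : K -> R).
Hypotheses (conjD : forall x y, conj (x + y) = conj x + conj y)
  (conjM : forall x y, conj (x * y) = conj x * conj y)
  (mod0 : modK 0 = 0)
  (modD : forall x y, modK (x + y) <= modK x + modK y)
  (modM : forall x y, modK (x * y) = modK x * modK y)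
  (modJ : forall x, modK (conj x) = modK x)
  (mod_ge0 : forall x, 0 <= modK x).

Lemma conj0 : conj 0 = 0.
Proof. by have := conjD 0 0; rewrite addr0 => /eqP; rewrite -subr_eq addrN eq_sym => /eqP. Qed.

Lemma modK_sum (I : finType) (F : I -> K) :
  modK (\sum_i F i) <= \sum_i modK (F i).
Proof.
elim/big_rec2: _ => [|i y1 y2 _ IH]; first by rewrite mod0.
by apply: le_trans (modD _ _) _; rewrite lerD2l.
Qed.

Lemma generic_main : lemma2p1_stmt conj modK.
Proof.
move=> V ip H n n0 zs z mu alpha beta gamma delta al ab ga gd A B HA HB.
have ip0 : forall y, ip 0 y z = 0.
  by move=> y; have := ip_scale H 0 0 y z; rewrite scale0r mul0r.
have ipl : forall y, ip (\sum_(i < n) mu i *: zs i) y z = \sum_(i < n) mu i * ip (zs i) y z.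
  move=> y; elim/big_rec2: _ => [|i y1 y2 _ IH]; first exact: ip0.
  by rewrite (ip_add H) (ip_scale H) IH.
have conjS : forall (F : 'I_n -> K), conj (\sum_i F i) = \sum_i conj (F i).
  by move=> F; elim/big_rec2: _ => [|i y1 y2 _ <-]; rewrite ?conj0 ?conjD.
have ipr : forall x, ip x (\sum_(j < n) mu j *: zs j) z =
    \sum_(j < n) conj (mu j) * ip x (zs j) z.
  move=> x; rewrite (ip_conj H) ipl conjS; apply: eq_bigr => j _.
  by rewrite conjM -(ip_conj H).
set a := mua modK mu; set d := nz2 modK ip zs z; set c := ipa modK ip zs z.
have a0 : forall i, 0 <= a i by move=> i; exact: mod_ge0.
have d0 : forall i, 0 <= d i by move=> i; exact: mod_ge0.
have c0 : forall i j, 0 <= c i j by move=> i j; exact: mod_ge0.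
have hL : lhs modK ip zs z mu <= \sum_(i < n) a i ^+ 2 * d i +
     \sum_(i < n) \sum_(j < n | j != i) a i * a j * c i j.
  rewrite /lhs ipl; apply: le_trans (modK_sum _ _) _.
  rewrite -big_split /=; apply: ler_sum => i _.
  rewrite modM ipr; apply: le_trans (ler_wpM2l (a0 i) (modK_sum _ _)) _.
  rewrite mulr_sumr (bigD1 i) //= modM modJ expr2 mulrA lerD2l.
  by apply: ler_sum => j _; rewrite modM modJ mulrA.
apply: le_trans hL _; apply: lerD.
  move: HA; rewrite !inE => /or3P [/eqP->|/eqP->|/eqP->].
  - exact: LA1.
  - exact: LA2.
  - exact: LA3.
move: HB; rewrite !inE => /or3P [/eqP->|/eqP->|/eqP->].
- by apply: LB1 => // i j; rewrite modM.
- exact: LB2.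
- exact: LB3.
Qed.

End Generic.

Theorem lemma2p1 (R : realType) :
  lemma2p1_stmt (fun x : R => x) (fun x : R => `|x|) /\
  lemma2p1_stmt (@Num.conj (R[i])) (@Normc.normc R).
Proof.
split.
  apply: generic_main => //.
  - exact: normr0.
  - exact: ler_normD.
  - exact: normrM.
apply: generic_main.
- by move=> x y; exact: rmorphD.
- by move=> x y; exact: rmorphM.
- exact: Normc.normc0.
- exact: le_normcD.
- exact: Normc.normcM.
- by case=> a b; rewrite /Normc.normc /= sqrrN.
- by case=> a b; exact: sqrtr_ge0.
Qed.
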